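(* Let $M$ be a real representable (loopless) matroid. Then $M$ is strictly uniformly dense if and only if $M$ has a representation $X$ such that the measure $\mu_X$ on the bases defined by $\mu_X(B)=\det(X_B)^2$ satisfies: $\mu_X(\{B: B\ni e\})$ is the same for all $e\in E$.
   Context: A matroid $M$ on ground set $E$ ($|E|=n$) of rank $k$ is real representable if there is a real full-rank $k\times n$ matrix $X$ (a representation) with columns indexed by $E$ such that a $k$-subset $B$ is a basis iff $\det(X_B)\ne0$, $X_B$ the submatrix on columns $B$. Density $\rho=|E|/k$. $M$ is strictly uniformly dense if $(\rho^{-1},\dots,\rho^{-1})$ lies in the relative interior of the base polytope (convex hull of basis indicator vectors); equivalently there is a measure $\mu$ with $\mu(B)>0$ for every basis such that $\mu(\{B:B\ni e\})$ is independent of $e\in E$. *)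

(* Defs.v *)
From HB Require Import structures.
From mathcomp Require Import all_boot all_order all_algebra.
From mathcomp Require Import reals.
Set Implicit Arguments. Unset Strict Implicit. Unset Printing Implicit Defensive.
Import Order.TTheory GRing.Theory Num.Theory.
Local Open Scope ring_scope.

(* Ground set E = 'I_n, a matroid is given by its family of bases
   (subsets of 'I_n).  *)

(* X_B : the k x k submatrix of X : 'M_(k,n) on the columns of B, taken in
   increasing order (enum B).  Only meaningful when #|B| = k. *)
Definition colsubB (R : realType) (k n : nat) (X : 'M[R]_(k, n))
    (B : {set 'I_n}) : 'M[R]_k :=
  \matrix_(i < k, j < k) nth 0 [seq X i c | c <- enum B] j.

Definition is_representation (R : realType) (k n : nat)
    (bases : {set {set 'I_n}}) (X : 'M[R]_(k, n)) : Prop :=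
  \rank X = k /\
  forall B : {set 'I_n},
    B \in bases <-> (#|B| = k /\ \det (colsubB X B) != 0).

Definition real_representable (R : realType) (k n : nat)
    (bases : {set {set 'I_n}}) : Prop :=
  exists X : 'M[R]_(k, n), is_representation bases X.

Definition loopless (n : nat) (bases : {set {set 'I_n}}) : Prop :=
  forall e : 'I_n, exists2 B, B \in bases & e \in B.

(* Strictly uniformly dense: (1/rho,...,1/rho) = (k/n,...,k/n) lies in the
   relative interior of the base polytope conv{1_B : B basis}, i.e. it is a
   convex combination of the basis indicator vectors with all coefficients
   strictly positive. *)
Definition strictly_uniformly_dense (R : realType) (k n : nat)
    (bases : {set {set 'I_n}}) : Prop :=
  exists mu : {set 'I_n} -> R,
    (forall B, B \in bases -> 0 < mu B) /\
    \sum_(B in bases) mu B = 1 /\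
    forall e : 'I_n, \sum_(B in bases | e \in B) mu B = k%:R / n%:R.

Definition muX_elem (R : realType) (k n : nat) (bases : {set {set 'I_n}})
    (X : 'M[R]_(k, n)) (e : 'I_n) : R :=
  \sum_(B in bases | e \in B) (\det (colsubB X B)) ^+ 2.

(* Main.v *)
Require Import Defs.
From HB Require Import structures.
From mathcomp Require Import all_boot all_order all_algebra.
From mathcomp Require Import reals.
From mathcomp Require Import all_classical all_reals all_analysis.
From mathcomp Require Import ring lra.
Import Order.TTheory GRing.Theory Num.Theory.
Import numFieldNormedType.Exports.
Local Open Scope ring_scope.

Lemma basis_exists (R : realType) (k n : nat) (bases : {set {set 'I_n}})
  (X : 'M[R]_(k, n)) : is_representation bases X -> loopless bases ->
  exists B, B \in bases.
Proof.
move=> [rk H] ll; case: (posnP n) => [n0|n0].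
  have k0 : k = 0%N by have := rank_leq_col X; rewrite rk n0; case: k {X rk H}.
  subst n k; exists (finset.set0 : {set 'I_0}); apply/H; split; first by rewrite cards0.
  by rewrite det_mx00 oner_neq0.
by have [B HB _] := ll (Ordinal n0); exists B.
Qed.

Lemma easy_dir (R : realType) (k n : nat) (bases : {set {set 'I_n}})
  (X : 'M[R]_(k, n)) : is_representation bases X -> loopless bases ->
  (forall e f, muX_elem bases X e = muX_elem bases X f) ->
  strictly_uniformly_dense R k bases.
Proof.
move=> rep ll heq.
have [B0 HB0] := @basis_exists _ _ _ _ X rep ll.
have [_ H] := rep.
pose w B := (\det (colsubB X B)) ^+ 2.
have wpos B : B \in bases -> 0 < w B.
  move/H=> [_ nz]; rewrite /w exprn_even_gt0 //= nz orbT //.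
pose W := \sum_(B in bases) w B.
have Wpos : 0 < W.
  rewrite /W (bigD1 B0) //=; have := wpos _ HB0.
  have : 0 <= \sum_(i in bases | i != B0) w i.
    by apply: sumr_ge0 => i /andP[hi _]; apply/ltW/wpos.
  move=> a b; exact: ltr_wpDr.
have WN0 : W != 0 by rewrite gt_eqF.
exists (fun B => w B / W); split; [|split].
- by move=> B hB; rewrite divr_gt0 // wpos.
- by rewrite -mulr_suml divff.
move=> e.
have hsum : \sum_(f : 'I_n) muX_elem bases X f = k%:R * W.
  rewrite /muX_elem.
  rewrite (exchange_big_dep (fun B => B \in bases)) /=; last by move=> i j _ /andP[].
  rewrite /W mulr_sumr; apply: eq_bigr => B hB.
  rewrite (eq_bigl (fun f => f \in B)); last by move=> f; rewrite hB.
  rewrite sumr_const; have [hk _] := (H B).1 hB; rewrite hk mulr_natl.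
  by [].
have hsum2 : \sum_(f : 'I_n) muX_elem bases X f = n%:R * muX_elem bases X e.
  rewrite (eq_bigr (fun _ => muX_elem bases X e)); last by move=> f _; rewrite (heq f e).
  by rewrite sumr_const card_ord mulr_natl.
have n0 : (0 < n)%N by case: n e {X rep H heq ll B0 HB0 w wpos W Wpos WN0 hsum hsum2 bases} => [[]|].
have nN0 : n%:R != 0 :> R by rewrite pnatr_eq0 -lt0n.
rewrite -mulr_suml.
have -> : \sum_(i in bases | e \in i) w i = muX_elem bases X e by [].
have hm : muX_elem bases X e = k%:R * W / n%:R.
  by rewrite -hsum hsum2 mulrC mulrA mulVf // mul1r.
rewrite hm; field.
by apply/andP; split.
Qed.

Lemma sum_cont (R : realType) (T : topologicalType) (I : Type) (s : seq I) (Pr : pred I)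
  (F : I -> T -> R) : (forall i, continuous (F i)) ->
  continuous (fun y => \sum_(i <- s | Pr i) F i y).
Proof.
move=> hF; elim: s => [|x s IH].
  by under eq_fun do rewrite big_nil; exact: cst_continuous.
under eq_fun do rewrite big_cons.
case: (Pr x) => //.
by move=> y; apply: continuousD; [exact: hF | exact: IH].
Qed.

Lemma term_le (R : realType) (I : finType) (P : {set I}) (f : I -> R) i :
  (forall j, j \in P -> 0 <= f j) -> i \in P -> f i <= \sum_(j in P) f j.
Proof.
move=> h hi; rewrite (bigD1 i) //= lerDl; apply: sumr_ge0 => j /andP[hj _]; exact: h.
Qed.

Lemma cont_g (R : realType) n (I : finType) (P : {set I}) (w : I -> R) (a : I -> 'I_n -> R) :
  continuous (fun y : 'rV[R]_n => \sum_(i in P) w i * expR (\sum_j y ord0 j * a i j)).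
Proof.
apply: sum_cont => i y.
have hl : continuous (fun y : 'rV[R]_n => \sum_j y ord0 j * a i j).
  apply: sum_cont => j z.
  apply: (@continuousM _ _ (fun y : 'rV[R]_n => y ord0 j) (fun=> a i j) z).
    exact: coord_continuous.
  exact: cst_continuous.
apply: (@continuousM _ _ (fun _ : 'rV[R]_n => w i) (fun y : 'rV[R]_n => expR (\sum_j y ord0 j * a i j)) y).
  exact: cst_continuous.
apply: (@continuous_comp _ _ _ (fun y : 'rV[R]_n => \sum_j y ord0 j * a i j) expR).
  exact: hl.
exact: continuous_expR.
Qed.

Lemma expR_le_quad (R : realType) (x : R) : x <= 2^-1 -> expR x <= 1 + x + 2 * x ^+ 2.
Proof.
move=> hx.
have hp : 0 < 1 - x by lra.
have h := expR_ge1Dx (- x); rewrite expRN in h.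
have he := expR_gt0 x.
have h1 : (1 - x) * expR x <= 1.
  have := ler_wpM2r (ltW he) h; rewrite mulVf ?gt_eqF //.
rewrite -(ler_pM2l hp); apply: (le_trans h1).
have : 0 <= x ^+ 2 * (1 - 2 * x) by apply: mulr_ge0; [exact: sqr_ge0 | lra].
move=> h2; have -> : (1 - x) * (1 + x + 2 * x ^+ 2) = 1 + x ^+ 2 * (1 - 2 * x) by ring.
lra.
Qed.

Lemma scaling_exists (R : realType) n (I : finType) (P : {set I}) (w mu : I -> R)
  (a : I -> 'I_n -> R) :
  (forall i, i \in P -> 0 < w i) -> (forall i, i \in P -> 0 < mu i) ->
  \sum_(i in P) mu i = 1 ->
  (forall e, \sum_(i in P) mu i * a i e = 0) ->
  exists y : 'rV[R]_n,
    forall e, \sum_(i in P) w i * expR (\sum_j y ord0 j * a i j) * a i e = 0.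
Proof.
move=> wpos mupos musum mua.
pose L i (y : 'rV[R]_n) := \sum_j y ord0 j * a i j.
pose g (y : 'rV[R]_n) := \sum_(i in P) w i * expR (L i y).
have Lmu y : \sum_(i in P) mu i * L i y = 0.
  rewrite /L; under eq_bigr do rewrite mulr_sumr.
  rewrite exchange_big /=; apply: big1 => j _.
  transitivity (y ord0 j * \sum_(i in P) mu i * a i j); last by rewrite mua mulr0.
  by rewrite mulr_sumr; apply: eq_bigr => i _; rewrite mulrCA.
have L0 i : L i 0 = 0 by rewrite /L big1 // => j _; rewrite mxE mul0r.
pose G0 := g 0.
have G0E : G0 = \sum_(i in P) w i.
  by rewrite /G0 /g; apply: eq_bigr => i _; rewrite L0 expR0 mulr1.
have G0ge : 0 <= G0.
  by rewrite G0E; apply: sumr_ge0 => i hi; apply/ltW/wpos.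
pose U := \sum_(i in P) G0 / w i.
have Uge : 0 <= U.
  by apply: sumr_ge0 => i hi; apply: divr_ge0 => //; apply/ltW/wpos.
pose V := \sum_(i in P) U / mu i.
have Vge : 0 <= V.
  by apply: sumr_ge0 => i hi; apply: divr_ge0 => //; apply/ltW/mupos.
pose M := U + V.
have Mge : 0 <= M by rewrite /M; lra.
have gterm y i : i \in P -> w i * expR (L i y) <= g y.
  move=> hi; apply: (@term_le _ _ P (fun i => w i * expR (L i y))) => // j hj.
  by apply: mulr_ge0; [apply/ltW/wpos | apply/ltW/expR_gt0].
have bound y : g y <= G0 -> forall i, i \in P -> `|L i y| <= M.
  move=> hy.
  have up i : i \in P -> L i y <= U.
    move=> hi.
    have h1 := le_trans (gterm y i hi) hy.
    have h2 : L i y <= expR (L i y) by have := expR_ge1Dx (L i y); lra.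
    have h3 : expR (L i y) <= G0 / w i by rewrite ler_pdivlMr ?wpos // mulrC.
    have h4 : G0 / w i <= U.
      apply: (@term_le _ _ P (fun j => G0 / w j)) => // j hj.
      by apply: divr_ge0 => //; apply/ltW/wpos.
    lra.
  move=> i hi.
  have low : - V <= L i y.
    have hs := Lmu y; rewrite (bigD1 i) //= in hs.
    have hr : \sum_(j in P | j != i) mu j * L j y <= U.
      apply: (@le_trans _ _ (\sum_(j in P | j != i) mu j * U)).
        apply: ler_sum => j /andP[hj _]; apply: ler_wpM2l; [exact/ltW/mupos | exact: up].
      rewrite -mulr_suml -[X in _ <= X]mul1r; apply: ler_wpM2r => //.
      rewrite -musum [X in _ <= X](bigD1 i) //= lerDr; exact/ltW/mupos.
    have h5 : - U <= mu i * L i y by lra.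
    have h6 : (- U) / mu i <= L i y.
      by rewrite mulrC ler_pdivrMl ?mupos.
    have h7 : U / mu i <= V.
      apply: (@term_le _ _ P (fun j => U / mu j)) => // j hj.
      by apply: divr_ge0 => //; apply/ltW/mupos.
    rewrite mulNr in h6; lra.
  have := up i hi; rewrite ler_norml /M; lra.
pose A : 'M[R]_(n, #|P|) := \matrix_(e, j) a (enum_val j) e.
have LAv y j : (y *m A) ord0 j = L (enum_val j) y.
  by rewrite mxE; apply: eq_bigr => e _; rewrite mxE.
have LA y i (hi : i \in P) : L i y = (y *m A) ord0 (enum_rank_in hi i).
  by rewrite LAv enum_rankK_in.
pose Q := pinvmx A.
pose proj (y : 'rV[R]_n) := y *m A *m Q.
have projA y : proj y *m A = y *m A by apply: mulmxKpV; exact: submxMl.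
have gproj y : g (proj y) = g y.
  by apply: eq_bigr => i hi; rewrite (LA _ _ hi) projA -LA.
pose Rad := M * \sum_j \sum_e `|Q j e|.
have Radge : 0 <= Rad.
  by apply: mulr_ge0 => //; apply: sumr_ge0 => j _; apply: sumr_ge0 => e _.
have projb y : g y <= G0 -> forall e, `|proj y ord0 e| <= Rad.
  move=> hy e; rewrite /proj mxE.
  apply: le_trans (ler_norm_sum _ _ _) _.
  apply: (@le_trans _ _ (\sum_j M * `|Q j e|)).
    apply: ler_sum => j _; rewrite normrM; apply: ler_wpM2r => //.
    by rewrite LAv; apply: bound => //; exact: enum_valP.
  rewrite /Rad -mulr_sumr; apply: ler_wpM2l => //; apply: ler_sum => j _.
  by rewrite (bigD1 e) //= lerDl; apply: sumr_ge0.
pose K := ([set v : 'rV[R]_n | forall i, `[- Rad, Rad]%classic (v ord0 i)])%classic.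
have K0 : K 0 by move=> i /=; rewrite mxE in_itv /=; apply/andP; split; lra.
have cK : compact K := rV_compact (fun i => @segment_compact _ (- Rad) Rad).
have [y0 y0K y0min] := @compact_EVT_min _ _ g K (ex_intro _ 0 K0) cK
   (continuous_subspaceT (@cont_g _ _ _ P w a)).
have gmin y : g y0 <= g y.
  case: (leP (g y) G0) => hy.
    rewrite -(gproj y); apply: (y0min (proj y)); rewrite inE => i.
    by have := projb y hy i; rewrite /= in_itv /= ler_norml.
  apply: le_trans (y0min 0 _) (ltW _) => //; by rewrite inE.
exists y0 => e.
pose nu i := w i * expR (L i y0).
have -> : \sum_(i in P) w i * expR (\sum_j y0 ord0 j * a i j) * a i e =
   \sum_(i in P) nu i * a i e by [].
set D := \sum_(i in P) nu i * a i e.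
case: (eqVneq D 0) => // hD; exfalso.
have nupos i : i \in P -> 0 < nu i.
  by move=> hi; apply: mulr_gt0; [exact: wpos | exact: expR_gt0].
pose S := \sum_(i in P) nu i * a i e ^+ 2.
pose T := \sum_(i in P) `|a i e|.
have Sge : 0 <= S.
  by apply: sumr_ge0 => i hi; apply: mulr_ge0; [exact/ltW/nupos | exact: sqr_ge0].
have Tge : 0 <= T by apply: sumr_ge0 => i hi.
pose q := S + `|D| * T + 1.
have qpos : 0 < q.
  have : 0 <= `|D| * T by apply: mulr_ge0.
  rewrite /q; lra.
pose eps := (4 * q)^-1.
have epspos : 0 < eps by rewrite /eps invr_gt0; lra.
have epsq : eps * q = 4^-1 by rewrite /eps; field; rewrite gt_eqF.
pose t := - D * eps.
pose y1 := y0 + \row_j (if j == e then t else 0).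
have Ly1 i : L i y1 = L i y0 + t * a i e.
  rewrite /L; under eq_bigr do rewrite !mxE mulrDl.
  rewrite big_split /=; congr (_ + _).
  rewrite (bigD1 e) //= eqxx big1 ?addr0 // => j /negbTE ->; by rewrite mul0r.
have small i : i \in P -> t * a i e <= 2^-1.
  move=> hi.
  have h1 : `|a i e| <= T by apply: (@term_le _ _ P (fun i => `|a i e|)).
  have h2 : `|t * a i e| <= eps * (`|D| * T).
    rewrite normrM /t normrM normrN (gtr0_norm epspos) -mulrA mulrCA.
    apply: ler_wpM2l; first exact/ltW.
    by apply: ler_wpM2l.
  have h3 : eps * (`|D| * T) <= eps * q.
    by apply: ler_wpM2l; [exact/ltW | rewrite /q; lra].
  have h4 := ler_norm (t * a i e).
  lra.
have key : g y1 <= g y0 + t * D + 2 * t ^+ 2 * S.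
  rewrite /g; under eq_bigr do rewrite Ly1 expRD mulrA.
  apply: (@le_trans _ _ (\sum_(i in P) nu i * (1 + t * a i e + 2 * (t * a i e) ^+ 2))).
    apply: ler_sum => i hi; apply: ler_wpM2l; first exact/ltW/nupos.
    by apply: expR_le_quad; apply: small.
  rewrite le_eqVlt; apply/orP; left; apply/eqP.
  have E : \sum_(i in P) nu i * (1 + t * a i e + 2 * (t * a i e) ^+ 2) =
     \sum_(i in P) (nu i + t * (nu i * a i e) + 2 * t ^+ 2 * (nu i * a i e ^+ 2)).
    by apply: eq_bigr => i _; ring.
  rewrite E.
  by rewrite !big_split /= -!mulr_sumr.
have neg : t * D + 2 * t ^+ 2 * S < 0.
  have -> : t * D + 2 * t ^+ 2 * S = - (D ^+ 2 * eps) * (1 - 2 * (eps * S)) by rewrite /t; ring.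
  have hD2 : 0 < D ^+ 2 by rewrite exprn_even_gt0 //= hD orbT.
  have hDT : 0 <= `|D| * T by apply: mulr_ge0.
  have : eps * S <= eps * q by apply: ler_wpM2l; [exact/ltW | rewrite /q; lra].
  rewrite epsq => hS.
  rewrite mulNr oppr_lt0; apply: mulr_gt0; first exact: mulr_gt0.
  lra.
have := gmin y1.
lra.
Qed.


Lemma nth_map_mul (R : realType) n (s : seq 'I_n) (f g : 'I_n -> R) j :
  nth 0 [seq f c * g c | c <- s] j = nth 0 [seq f c | c <- s] j * nth 1 [seq g c | c <- s] j.
Proof.
elim: s j => [|x s IH] [|j] /=; rewrite ?nth_nil ?mul0r //.
Qed.

Lemma prod_nth (R : realType) n (s : seq 'I_n) (g : 'I_n -> R) k :
  size s = k -> \prod_(j < k) nth 1 [seq g c | c <- s] j = \prod_(c <- s) g c.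
Proof.
move=> <-; elim: s => [|x s IH]; first by rewrite big_ord0 big_nil.
rewrite big_ord_recl big_cons /=; congr (_ * _); rewrite -IH.
by apply: eq_bigr => j _.
Qed.

Lemma colsub_scale (R : realType) k n (X : 'M[R]_(k, n)) (d : 'I_n -> R) (B : {set 'I_n}) :
  #|B| = k ->
  \det (colsubB (X *m diag_mx (\row_c d c)) B) = \det (colsubB X B) * \prod_(c in B) d c.
Proof.
move=> hB.
have -> : colsubB (X *m diag_mx (\row_c d c)) B =
    colsubB X B *m diag_mx (\row_j nth 1 [seq d c | c <- enum B] j).
  apply/matrixP => i j; rewrite mul_mx_diag !mxE.
  rewrite (_ : [seq (X *m diag_mx (\row_c d c)) i c | c <- enum B] =
               [seq X i c * d c | c <- enum B]).
    by rewrite nth_map_mul.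
  by apply: eq_map => c; rewrite mul_mx_diag !mxE.
rewrite det_mulmx det_diag; congr (_ * _).
under eq_bigr do rewrite mxE.
by rewrite (@prod_nth _ _ _ _ k) ?big_enum // -cardE.
Qed.

Lemma marg_lemma (R : realType) n (P : {set {set 'I_n}}) (f : {set 'I_n} -> R) (c : R) e :
  \sum_(B in P) f B * ((e \in B)%:R - c) =
  \sum_(B in P | e \in B) f B - c * \sum_(B in P) f B.
Proof.
under eq_bigr do rewrite mulrBr.
rewrite sumrB mulr_sumr; congr (_ - _); last by apply: eq_bigr => B _; rewrite mulrC.
rewrite big_mkcondr /=; apply: eq_bigr => B _.
by case: (e \in B); rewrite ?mulr1 ?mulr0.
Qed.

Theorem theorem4p6 (R : realType) (k n : nat) (bases : {set {set 'I_n}}) :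
  real_representable R k bases ->
  loopless bases ->
  (strictly_uniformly_dense R k bases <->
   exists X : 'M[R]_(k, n),
     is_representation bases X /\
     forall e f : 'I_n, muX_elem bases X e = muX_elem bases X f).
Proof.
move=> [X rep] ll; split; last first.
  by move=> [X' [rep' heq]]; exact: (@easy_dir _ _ _ _ X' rep' ll heq).
move=> [mu [mupos [musum mumarg]]].
have [rk H] := rep.
pose c := k%:R / n%:R : R.
pose w B := (\det (colsubB X B)) ^+ 2.
pose a (B : {set 'I_n}) (e : 'I_n) := (e \in B)%:R - c.
have wpos B : B \in bases -> 0 < w B.
  by move/H=> [_ nz]; rewrite /w exprn_even_gt0 //= nz orbT.
have mua e : \sum_(B in bases) mu B * a B e = 0.
  by rewrite /a marg_lemma mumarg musum mulr1 subrr.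
have [y hy] := @scaling_exists _ _ _ bases w mu a wpos mupos musum mua.
pose d (c0 : 'I_n) := expR (y ord0 c0 / 2).
pose X' := X *m diag_mx (\row_c0 d c0).
have dpos c0 : 0 < d c0 by exact: expR_gt0.
have prodpos (B : {set 'I_n}) : 0 < \prod_(c0 in B) d c0 by apply: prodr_gt0 => c0 _.
have detX' (B : {set 'I_n}) : #|B| = k -> \det (colsubB X' B) = \det (colsubB X B) * \prod_(c0 in B) d c0.
  exact: colsub_scale.
exists X'; split; first split.
- rewrite mxrankMfree // row_free_unit unitmxE det_diag unitfE.
  by apply: lt0r_neq0; apply: prodr_gt0 => c0 _; rewrite mxE.
- move=> B; rewrite H; split => -[hB hdet]; split => //; rewrite detX' // in hdet *.
    by rewrite mulf_neq0 // gt_eqF.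
  by move: hdet; rewrite mulf_eq0 negb_or => /andP[].
pose K0 := expR (c * \sum_j y ord0 j).
pose nu B := w B * expR (\sum_j y ord0 j * a B j).
have me e : muX_elem bases X' e = K0 * (c * \sum_(B in bases) nu B).
  rewrite /muX_elem.
  have step B : B \in bases -> (\det (colsubB X' B)) ^+ 2 = nu B * K0.
    move=> hB; have [hk _] := (H B).1 hB.
    rewrite detX' // exprMn -prodrXl.
    have hd c0 : d c0 ^+ 2 = expR (y ord0 c0).
      by rewrite expr2 /d -expRD -splitr.
    under eq_bigr do rewrite hd.
    rewrite -expR_sum /nu -mulrA -expRD; congr (_ * expR _).
    have -> : \sum_j y ord0 j * a B j = \sum_(j in B) y ord0 j - c * \sum_j y ord0 j.
      rewrite /a.
      under eq_bigr do rewrite mulrBr.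
      rewrite sumrB mulr_sumr; congr (_ - _); last by apply: eq_bigr => j _; rewrite mulrC.
      rewrite [RHS]big_mkcond /=; apply: eq_bigr => j _.
      by case: (j \in B); rewrite ?mulr1 ?mulr0.
    by rewrite subrK.
  transitivity (\sum_(B in bases | e \in B) nu B * K0).
    by apply: eq_bigr => B /andP[hB _]; exact: step.
  rewrite -mulr_suml mulrC; congr (_ * _).
  have : \sum_(B in bases) nu B * ((e \in B)%:R - c) = 0 by exact: hy e.
  rewrite (@marg_lemma _ _ bases nu c e) => /eqP; rewrite subr_eq0 => /eqP.
  by [].
by move=> e f; rewrite !me.
Qed.
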